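(* Let $m\in\mathbb{N}$, let $\frac{m-1}{m}<\lambda\le\frac{m}{m+1}$, and let $f(x)=\lfloor\lambda x\rfloor$ for $x\in\mathbb{R}$, with $f^n$ its $n$-fold iterate. Then: - $\lim_{n\to\infty}f^n(x)=0$ for all $x\in[0,+\infty)$; - for each $k\in\{-1,-2,\dots,-m\}$, $\lim_{n\to\infty}f^n(x)=k$ for all $x\in\left[\frac{k}{\lambda},\frac{k+1}{\lambda}\right)$; - $\lim_{n\to\infty}f^n(x)=-m$ for all $x\in\left(-\infty,-\frac{m}{\lambda}\right)$.
   Context: $\lfloor x\rfloor=\max\{m\in\mathbb{Z}: m\le x\}$ denotes the floor function; $\mathbb{N}=\{1,2,\dots\}$. *)

(* Defs.v *)
From Stdlib Require Import Reals.
Open Scope R_scope.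

(* floor x = max { m in Z | m <= x }. In Stdlib, up x is the unique integer
   with x < IZR (up x) <= x + 1, so the floor is up x - 1 (= Int_part x). *)
Definition rfloor (x : R) : R := IZR (up x - 1).

Definition ffloor (lambda : R) (x : R) : R := rfloor (lambda * x).

Fixpoint fiter (f : R -> R) (n : nat) (x : R) : R :=
  match n with
  | O => x
  | S k => f (fiter f k x)
  end.

(* Main.v *)
Require Import Defs.
From Stdlib Require Import Reals Lra Lia Psatz ZArith.
Open Scope R_scope.

Lemma floor_spec (y : R) : IZR (up y - 1)%Z <= y < IZR (up y - 1)%Z + 1.
Proof. destruct (archimed y) as [H1 H2]. rewrite minus_IZR. lra. Qed.

Lemma floor_unique (z : Z) (y : R) : IZR z <= y < IZR z + 1 -> rfloor y = IZR z.
Proof.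
  intros [H1 H2]. unfold rfloor. destruct (floor_spec y) as [H3 H4].
  assert (A : IZR z < IZR (up y - 1 + 1)) by (rewrite plus_IZR; lra).
  assert (B : IZR (up y - 1) < IZR (z + 1)) by (rewrite plus_IZR; lra).
  apply lt_IZR in A. apply lt_IZR in B. f_equal. lia.
Qed.

Lemma fiter_S' f n x : fiter f (S n) x = fiter f n (f x).
Proof. revert x; induction n; intros x; simpl; auto. simpl in IHn. rewrite IHn. reflexivity. Qed.

Lemma cv_ev (u : nat -> R) l : (exists N, forall n, (n >= N)%nat -> u n = l) -> Un_cv u l.
Proof.
  intros [N HN] eps He. exists N. intros n Hn. rewrite HN by lia.
  unfold R_dist. rewrite Rminus_diag, Rabs_R0. lra.
Qed.

Lemma step (lambda : R) (z : Z) : exists w, ffloor lambda (IZR z) = IZR w /\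
   IZR w <= lambda * IZR z < IZR w + 1.
Proof. exists (up (lambda * IZR z) - 1)%Z. split; [reflexivity | apply floor_spec]. Qed.

Lemma stepx (lambda x : R) : exists w, ffloor lambda x = IZR w /\
   IZR w <= lambda * x < IZR w + 1.
Proof. exists (up (lambda * x) - 1)%Z. split; [reflexivity | apply floor_spec]. Qed.

Theorem theorem2 (m : nat) (lambda : R) :
  (1 <= m)%nat ->
  (INR m - 1) / INR m < lambda ->
  lambda <= INR m / (INR m + 1) ->
  (forall x : R, 0 <= x -> Un_cv (fun n => fiter (ffloor lambda) n x) 0) /\
  (forall k : Z, (- Z.of_nat m <= k <= -1)%Z ->
     forall x : R, IZR k / lambda <= x < (IZR k + 1) / lambda ->
       Un_cv (fun n => fiter (ffloor lambda) n x) (IZR k)) /\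
  (forall x : R, x < - INR m / lambda ->
     Un_cv (fun n => fiter (ffloor lambda) n x) (- INR m)).
Proof.
  intros Hm H1 H2.
  assert (HM : 1 <= INR m) by (apply (le_INR 1); lia).
  assert (HMZ : INR m = IZR (Z.of_nat m)) by apply INR_IZR_INZ.
  set (M := INR m) in *.
  assert (A1 : lambda * M > M - 1).
  { apply (Rmult_lt_compat_r M) in H1; [|lra].
    unfold Rdiv in H1. rewrite Rmult_assoc, Rinv_l in H1 by lra. lra. }
  assert (A2 : lambda * (M + 1) <= M).
  { apply (Rmult_le_compat_r (M+1)) in H2; [|lra].
    unfold Rdiv in H2. rewrite Rmult_assoc, Rinv_l in H2 by lra. lra. }
  assert (Hl0 : 0 < lambda) by nra.
  assert (Hl1 : lambda < 1) by nra.
  set (f := ffloor lambda).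
  assert (Fix : forall k, (- Z.of_nat m <= k <= -1)%Z -> f (IZR k) = IZR k).
  { intros k Hk. apply floor_unique.
    assert (K1 : - M <= IZR k) by (rewrite HMZ, <- opp_IZR; apply IZR_le; lia).
    assert (K2 : IZR k <= -1) by (apply IZR_le; lia).
    nra. }
  assert (FixN : forall k n, (- Z.of_nat m <= k <= -1)%Z -> fiter f n (IZR k) = IZR k).
  { intros k n Hk. induction n; simpl; auto. rewrite IHn. apply Fix; auto. }
  assert (Pos : forall n z, (0 <= z)%Z -> (z <= Z.of_nat n)%Z -> fiter f n (IZR z) = 0).
  { induction n; intros z Hz Hzn.
    - simpl. assert (z = 0%Z) by lia. subst. reflexivity.
    - rewrite fiter_S'. destruct (step lambda z) as [w [Hw [Hw1 Hw2]]].
      fold f in Hw. rewrite Hw. apply IHn.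
      + assert (0 <= IZR z) by (apply IZR_le; lia).
        assert (IZR (-1) < IZR w) by nra. apply lt_IZR in H0. lia.
      + destruct (Z.eq_dec z 0) as [->|Hz0].
        * assert (IZR w < IZR 1) by nra. apply lt_IZR in H. rewrite Nat2Z.inj_succ in Hzn. lia.
        * assert (1 <= IZR z) by (apply IZR_le; lia).
          assert (IZR w < IZR z) by nra. apply lt_IZR in H0. rewrite Nat2Z.inj_succ in Hzn. lia. }
  assert (Neg : forall n z, (z <= - Z.of_nat m)%Z -> (- Z.of_nat m - z <= Z.of_nat n)%Z ->
             fiter f n (IZR z) = - M).
  { induction n; intros z Hz Hzn.
    - simpl. assert (z = - Z.of_nat m)%Z by lia. subst. rewrite opp_IZR, HMZ. reflexivity.
    - destruct (Z.eq_dec z (- Z.of_nat m)) as [->|Hz0].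
      + rewrite FixN by lia. rewrite opp_IZR, HMZ. reflexivity.
      + rewrite fiter_S'. destruct (step lambda z) as [w [Hw [Hw1 Hw2]]].
        fold f in Hw. rewrite Hw. rewrite Nat2Z.inj_succ in Hzn.
        assert (Z1 : IZR z <= - M - 1).
        { rewrite HMZ, <- opp_IZR, <- minus_IZR. apply IZR_le. lia. }
        assert (IZR z < IZR w) by nra. apply lt_IZR in H.
        assert (IZR w < IZR (- Z.of_nat m + 1)) by (rewrite plus_IZR, opp_IZR, <- HMZ; nra).
        apply lt_IZR in H0. apply IHn; lia. }
  split; [|split].
  - intros x Hx. apply cv_ev. destruct (stepx lambda x) as [w [Hw [Hw1 Hw2]]].
    fold f in Hw.
    assert (IZR (-1) < IZR w) by nra. apply lt_IZR in H.
    exists (S (Z.to_nat w)). intros n Hn. destruct n as [|n]; [lia|].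
    rewrite fiter_S', Hw. apply Pos; lia.
  - intros k Hk x [Hx1 Hx2]. apply cv_ev. exists 1%nat. intros n Hn.
    destruct n as [|n]; [lia|]. rewrite fiter_S'.
    assert (Fx : f x = IZR k).
    { apply floor_unique.
      apply (Rmult_le_compat_l lambda) in Hx1; [|lra].
      apply (Rmult_lt_compat_l lambda) in Hx2; [|lra].
      replace (lambda * (IZR k / lambda)) with (IZR k) in Hx1 by (field; lra).
      replace (lambda * ((IZR k + 1) / lambda)) with (IZR k + 1) in Hx2 by (field; lra).
      lra. }
    rewrite Fx. apply FixN; auto.
  - intros x Hx. apply cv_ev. destruct (stepx lambda x) as [w [Hw [Hw1 Hw2]]].
    fold f in Hw.
    apply (Rmult_lt_compat_l lambda) in Hx; [|lra].
    replace (lambda * (- M / lambda)) with (- M) in Hx by (field; lra).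
    assert (IZR w < IZR (- Z.of_nat m)) by (rewrite opp_IZR, <- HMZ; lra).
    apply lt_IZR in H.
    exists (S (Z.to_nat (- Z.of_nat m - w))). intros n Hn. destruct n as [|n]; [lia|].
    rewrite fiter_S', Hw. apply Neg; lia.
Qed.
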